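(* For integers $m\neq 0$ and $n$, define \[ \mathcal{I}_1^{(m,n)}=\frac{1}{|m|}\sup_{0\le s\le |m|}\int_0^s K_{n+1}(s)I_n(t)\,t\,dt,\qquad \mathcal{I}_2^{(m,n)}=\frac{1}{|m|}\sup_{0\le t\le |m|}\int_t^{|m|} K_{n+1}(s)I_n(t)\,s\,ds. \] Then there is a constant $C$, independent of $m$ and $n$, such that for $i=1,2$ and all integers $m\neq 0$, $n$, \[ \mathcal{I}_i^{(m,n)}\le\frac{C}{\sqrt{1+m^2+n^2}}. \]
   Context: $I_n,K_n$ are the modified Bessel functions of the first and second kind of integer order $n$: $I_n(t)=\frac1\pi\int_0^\pi e^{t\cos\alpha}\cos(n\alpha)\,d\alpha$, $K_n(t)=\int_0^\infty e^{-t\cosh\alpha}\cosh(n\alpha)\,d\alpha$ for $t>0$. *)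

(* Defs.v *)
From Stdlib Require Import Reals ZArith.
From Coquelicot Require Import Coquelicot.
Open Scope R_scope.

Definition besselI (n : Z) (t : R) : R :=
  / PI * RInt (fun a => exp (t * cos a) * cos (IZR n * a)) 0 PI.

Definition besselK (n : Z) (t : R) : R :=
  RInt_gen (fun a => exp (- t * cosh a) * cosh (IZR n * a))
    (at_point 0) (Rbar_locally p_infty).

(* Main.v *)
Require Import Defs.
From Stdlib Require Import Reals ZArith Lra Lia Psatz FunctionalExtensionality.
From Coquelicot Require Import Coquelicot.
Open Scope R_scope.


Lemma mono_deriv (f df : R -> R) (a b : R) :
  a <= b ->
  (forall x, a <= x <= b -> ex_derive f x) ->
  (forall x, a < x < b -> is_derive f x (df x)) ->
  (forall x, a < x < b -> 0 <= df x) -> f a <= f b.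
Proof.
  intros Hab Hex Hd Hpos.
  destruct (Req_dec a b) as [->|Hne]; [lra|].
  assert (pr1 : forall c, a < c < b -> derivable_pt f c).
  { intros c Hc. apply ex_derive_Reals_0. apply Hex; lra. }
  assert (pr2 : forall c, a < c < b -> derivable_pt id c).
  { intros c Hc. apply derivable_pt_id. }
  destruct (MVT f id a b pr1 pr2) as [c [P Heq]]; [lra| | |].
  - intros x Hx. apply continuity_pt_filterlim. refine (ex_derive_continuous f x _). apply Hex; lra.
  - intros x Hx. apply derivable_continuous_pt. apply derivable_pt_id.
  - rewrite Derive_Reals in Heq. rewrite Derive_Reals in Heq.
    rewrite (is_derive_unique f c (df c)) in Heq by (apply Hd; lra).
    rewrite Derive_id in Heq. unfold id in Heq.
    specialize (Hpos c P). nra.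
Qed.

Lemma mono_deriv_nonincr (f df : R -> R) (a b : R) :
  a <= b ->
  (forall x, a <= x <= b -> ex_derive f x) ->
  (forall x, a < x < b -> is_derive f x (df x)) ->
  (forall x, a < x < b -> df x <= 0) -> f b <= f a.
Proof.
  intros Hab Hex Hd Hneg.
  assert (H := mono_deriv (fun x => - f x) (fun x => - df x) a b Hab).
  cut (- f a <= - f b). lra.
  apply H.
  - intros x Hx. exists (- Derive f x). apply (is_derive_opp f). apply Derive_correct. auto.
  - intros x Hx. apply (is_derive_opp f). auto.
  - intros x Hx. specialize (Hneg x Hx). lra.
Qed.


Lemma ex_RInt_der (f : R -> R) a b : (forall z, ex_derive f z) -> ex_RInt f a b.
Proof.
  intros H. apply (ex_RInt_continuous (V:=R_CompleteNormedModule)). intros z _. exact (ex_derive_continuous f z (H z)).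
Qed.

Definition iI (n : Z) (x a : R) := exp (x * cos a) * cos (IZR n * a).

Lemma ex_RInt_iI n x a b : ex_RInt (iI n x) a b.
Proof. apply ex_RInt_der. intros z. unfold iI. auto_derive. auto. Qed.

Lemma besselI_eq n x : besselI n x = / PI * RInt (iI n x) 0 PI.
Proof. reflexivity. Qed.

Lemma cos_prod (n : Z) t : cos t * cos (IZR n * t) =
  (cos (IZR (n - 1) * t) + cos (IZR (n + 1) * t)) / 2.
Proof.
  rewrite minus_IZR, plus_IZR.
  replace ((IZR n - 1) * t) with (IZR n * t - t) by ring.
  replace ((IZR n + 1) * t) with (IZR n * t + t) by ring.
  rewrite cos_minus, cos_plus. field.
Qed.

Lemma sin_prod (n : Z) t : sin t * sin (IZR n * t) =
  (cos (IZR (n - 1) * t) - cos (IZR (n + 1) * t)) / 2.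
Proof.
  rewrite minus_IZR, plus_IZR.
  replace ((IZR n - 1) * t) with (IZR n * t - t) by ring.
  replace ((IZR n + 1) * t) with (IZR n * t + t) by ring.
  rewrite cos_minus, cos_plus. field.
Qed.

Lemma is_RInt_R_plus (g h : R -> R) a b lg lh :
  is_RInt g a b lg -> is_RInt h a b lh -> is_RInt (fun t => g t + h t) a b (lg + lh).
Proof. intros; apply (is_RInt_plus (V:=R_NormedModule)); auto. Qed.
Lemma is_RInt_R_minus (g h : R -> R) a b lg lh :
  is_RInt g a b lg -> is_RInt h a b lh -> is_RInt (fun t => g t - h t) a b (lg - lh).
Proof. intros; apply (is_RInt_minus (V:=R_NormedModule)); auto. Qed.
Lemma is_RInt_R_scal (g : R -> R) a b k lg :
  is_RInt g a b lg -> is_RInt (fun t => k * g t) a b (k * lg).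
Proof. intros; apply (is_RInt_scal (V:=R_NormedModule)); auto. Qed.
Lemma RInt_correct_R (g : R -> R) a b : ex_RInt g a b -> is_RInt g a b (RInt g a b).
Proof. intros; apply (RInt_correct (V:=R_CompleteNormedModule)); auto. Qed.
Lemma RInt_unique_R (g : R -> R) a b l : is_RInt g a b l -> RInt g a b = l.
Proof. intros; apply (is_RInt_unique (V:=R_CompleteNormedModule)); auto. Qed.

Lemma RInt_half_sum (f g h : R -> R) a b :
  ex_RInt g a b -> ex_RInt h a b ->
  (forall t, f t = (g t + h t) / 2) ->
  RInt f a b = (RInt g a b + RInt h a b) / 2.
Proof.
  intros Hg Hh Hf. apply RInt_unique_R.
  apply (is_RInt_ext (fun t => /2 * (g t + h t))).
  { intros t _. rewrite Hf. apply Rmult_comm. }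
  replace ((RInt g a b + RInt h a b) / 2) with (/2 * (RInt g a b + RInt h a b)) by (apply Rmult_comm).
  apply is_RInt_R_scal, is_RInt_R_plus; apply RInt_correct_R; auto.
Qed.

Lemma RInt_half_diff (f g h : R -> R) a b :
  ex_RInt g a b -> ex_RInt h a b ->
  (forall t, f t = (g t - h t) / 2) ->
  RInt f a b = (RInt g a b - RInt h a b) / 2.
Proof.
  intros Hg Hh Hf. apply RInt_unique_R.
  apply (is_RInt_ext (fun t => /2 * (g t - h t))).
  { intros t _. rewrite Hf. apply Rmult_comm. }
  replace ((RInt g a b - RInt h a b) / 2) with (/2 * (RInt g a b - RInt h a b)) by (apply Rmult_comm).
  apply is_RInt_R_scal, is_RInt_R_minus; apply RInt_correct_R; auto.
Qed.

Lemma I_deriv n x :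
  is_derive (besselI n) x ((besselI (n - 1) x + besselI (n + 1) x) / 2).
Proof.
  unfold besselI.
  assert (E: forall A B : R, (/PI*A + /PI*B)/2 = /PI * ((A+B)/2)) by (intros; field; apply PI_neq0).
  rewrite E; clear E.
  apply (is_derive_scal (fun x => RInt (fun a => exp (x * cos a) * cos (IZR n * a)) 0 PI)).
  assert (HD : forall u v, Derive (fun z => exp (z * cos v) * cos (IZR n * v)) u
                = cos v * exp (u * cos v) * cos (IZR n * v)).
  { intros u v. apply is_derive_unique. auto_derive. auto. ring. }
  assert (H := is_derive_RInt_param (fun u t => exp (u * cos t) * cos (IZR n * t)) 0 PI x).
  simpl in H.
  rewrite (RInt_ext _ (fun t => cos t * exp (x * cos t) * cos (IZR n * t))) in H.
  2:{ intros t _. apply HD. }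
  rewrite (RInt_half_sum _ (iI (n-1) x) (iI (n+1) x)) in H.
  - apply H.
    + apply filter_forall. intros x0 t _. auto_derive. auto.
    + intros t _. apply (continuity_2d_pt_ext (fun u v => cos v * exp (u * cos v) * cos (IZR n * v))).
      { intros; symmetry; apply HD. }
      apply continuity_2d_pt_mult.
      * apply continuity_2d_pt_mult.
        -- apply (continuity_1d_2d_pt_comp cos (fun _ v => v)). apply continuity_cos.
           apply continuity_2d_pt_id2.
        -- apply (continuity_1d_2d_pt_comp exp (fun u v => u * cos v)). apply derivable_continuous_pt, derivable_pt_exp.
           apply continuity_2d_pt_mult. apply continuity_2d_pt_id1.
           apply (continuity_1d_2d_pt_comp cos (fun _ v => v)). apply continuity_cos.
           apply continuity_2d_pt_id2.
      * apply (continuity_1d_2d_pt_comp cos (fun _ v => IZR n * v)). apply continuity_cos.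
        apply continuity_2d_pt_mult. apply continuity_2d_pt_const. apply continuity_2d_pt_id2.
    + apply filter_forall. intros y. apply (ex_RInt_iI n y).
  - apply ex_RInt_iI.
  - apply ex_RInt_iI.
  - intros t. unfold iI.
    rewrite <- Rmult_plus_distr_l.
    replace (cos t * exp (x*cos t) * cos (IZR n * t)) with (exp (x * cos t) * (cos t * cos (IZR n * t))) by ring. rewrite cos_prod. field.
Qed.


Lemma I_rec n x :
  2 * IZR n * besselI n x = x * (besselI (n - 1) x - besselI (n + 1) x).
Proof.
  set (F := fun a => exp (x * cos a) * sin (IZR n * a)).
  set (dF := fun a => IZR n * iI n x a - x * ((iI (n-1) x a - iI (n+1) x a) / 2)).
  assert (H1 : is_RInt dF 0 PI (minus (F PI) (F 0))).
  { apply (is_RInt_derive (V:=R_CompleteNormedModule)).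
    - intros a _. unfold F, dF, iI. auto_derive. auto.
      replace ((exp (x * cos a) * cos (IZR (n - 1) * a) - exp (x * cos a) * cos (IZR (n + 1) * a)) / 2) with (exp (x * cos a) * ((cos (IZR (n - 1) * a) - cos (IZR (n + 1) * a)) / 2)) by field. rewrite <- (sin_prod n a).
      ring.
    - intros a _. unfold dF, iI.
      apply (ex_derive_continuous (V:=R_NormedModule)). auto_derive. auto. }
  assert (H0 : minus (F PI) (F 0) = 0).
  { unfold F. rewrite Rmult_0_r, sin_0. rewrite sin_eq_0_1 by (exists n; ring).
    unfold minus, plus, opp; simpl. ring. }
  rewrite H0 in H1.
  assert (H2 : is_RInt dF 0 PI (IZR n * RInt (iI n x) 0 PI
       - x * ((RInt (iI (n-1) x) 0 PI - RInt (iI (n+1) x) 0 PI) / 2))).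
  { apply is_RInt_R_minus.
    - apply is_RInt_R_scal. apply RInt_correct_R, ex_RInt_iI.
    - apply is_RInt_R_scal.
      apply (is_RInt_ext (fun a => / 2 * (iI (n-1) x a - iI (n+1) x a))).
      { intros; apply Rmult_comm. }
      replace ((RInt (iI (n - 1) x) 0 PI - RInt (iI (n + 1) x) 0 PI) / 2) with
        (/2 * (RInt (iI (n - 1) x) 0 PI - RInt (iI (n + 1) x) 0 PI)) by field.
      apply is_RInt_R_scal, is_RInt_R_minus; apply RInt_correct_R, ex_RInt_iI. }
  apply RInt_unique_R in H1. apply RInt_unique_R in H2. rewrite H1 in H2.
  rewrite !besselI_eq.
  assert (PI > 0) by apply PI_RGT_0.
  apply (Rmult_eq_reg_l PI); [|lra].
  field_simplify; [|lra..].
  nra.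
Qed.


Lemma exp_le x y : x <= y -> exp x <= exp y.
Proof. intros [H|H]. left; apply exp_increasing; auto. subst; right; auto. Qed.

Lemma I_sym n x : besselI (- n) x = besselI n x.
Proof.
  unfold besselI. f_equal. apply RInt_ext. intros t _.
  rewrite opp_IZR. replace (- IZR n * t) with (- (IZR n * t)) by ring.
  rewrite cos_neg. reflexivity.
Qed.

Lemma xcos_le x t : x * cos t <= Rabs x.
Proof.
  destruct (COS_bound t). destruct (Rle_dec 0 x).
  - rewrite Rabs_right by lra. nra.
  - rewrite Rabs_left by lra. nra.
Qed.

Lemma I_abs n x : Rabs (besselI n x) <= exp (Rabs x).
Proof.
  rewrite besselI_eq. assert (HP : PI > 0) by apply PI_RGT_0.
  rewrite Rabs_mult, (Rabs_right (/ PI)) by (left; apply Rinv_0_lt_compat; lra).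
  assert (H := abs_RInt_le_const (iI n x) 0 PI (exp (Rabs x)) (Rlt_le _ _ HP) (ex_RInt_iI n x 0 PI)).
  assert (Rabs (RInt (iI n x) 0 PI) <= (PI - 0) * exp (Rabs x)).
  { apply H. intros t _. unfold iI. rewrite Rabs_mult, Rabs_right by (left; apply exp_pos).
    destruct (COS_bound (IZR n * t)).
    assert (Rabs (cos (IZR n * t)) <= 1) by (apply Rabs_le; lra).
    assert (exp (x * cos t) <= exp (Rabs x)) by (apply exp_le, xcos_le).
    assert (0 < exp (x * cos t)) by apply exp_pos.
    assert (0 <= Rabs (cos (IZR n * t))) by apply Rabs_pos.
    nra. }
  apply (Rmult_le_reg_l PI); [lra|].
  replace (PI * (/ PI * Rabs (RInt (iI n x) 0 PI))) with (Rabs (RInt (iI n x) 0 PI)) by (field; lra).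
  lra.
Qed.

Lemma I_at0 n : 0 <= besselI n 0.
Proof.
  rewrite besselI_eq. assert (HP : PI > 0) by apply PI_RGT_0.
  destruct (Z.eq_dec n 0) as [->|Hn].
  - rewrite (RInt_ext _ (fun _ => 1)).
    + rewrite RInt_const. unfold scal; simpl; unfold mult; simpl.
      assert (0 < / PI) by (apply Rinv_0_lt_compat; lra). nra.
    + intros t _. unfold iI. rewrite Rmult_0_l, exp_0, Rmult_0_l, cos_0. apply Rmult_1_l.
  - assert (Hn' : IZR n <> 0) by (apply not_0_IZR; auto).
    assert (H : is_RInt (iI n 0) 0 PI (minus (sin (IZR n * PI) / IZR n)
                                          (sin (IZR n * 0) / IZR n))).
    { apply (is_RInt_derive (V:=R_CompleteNormedModule) (fun a => sin (IZR n * a) / IZR n)).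
      - intros a _. unfold iI. auto_derive. auto. rewrite Rmult_0_l, exp_0. field. auto.
      - intros a _. unfold iI. apply (ex_derive_continuous (V:=R_NormedModule)). auto_derive. auto. }
    apply RInt_unique_R in H. rewrite H. simpl.
    rewrite Rmult_0_r, sin_0, sin_eq_0_1 by (exists n; ring).
    unfold minus, plus, opp; simpl. lra.
Qed.


Lemma ex_derive_I n x : ex_derive (besselI n) x.
Proof. eexists. apply I_deriv. Qed.

Lemma INR_fact_pos N : 0 < INR (fact N).
Proof. apply lt_0_INR, lt_O_fact. Qed.

Lemma I_lower (N : nat) : forall n x, 0 <= x ->
  - (x ^ N / INR (fact N)) * exp x <= besselI n x.
Proof.
  induction N as [|N IH]; intros n x Hx.
  - simpl. assert (H := I_abs n x). rewrite (Rabs_right x) in H by lra.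
    apply Rabs_le_between in H. lra.
  - set (c := INR (fact (S N))).
    assert (Hc : c = INR (S N) * INR (fact N)) by (unfold c; rewrite fact_simpl, mult_INR; auto).
    assert (HfN := INR_fact_pos N).
    assert (HSN : 0 < INR (S N)) by (apply lt_0_INR; lia).
    set (g := fun y => exp y * (y ^ S N / c)).
    set (dg := fun y => exp y * (y ^ S N / c) + exp y * (y ^ N / INR (fact N))).
    assert (Hg : forall y : R, is_derive g y (dg y)).
    { intros y. unfold g, dg. auto_derive. auto. rewrite Hc. cbn [pow]. change (match N with O => 1 | S _ => INR N + 1 end) with (INR (S N)). field. lra. }
    assert (H := mono_deriv (fun y => besselI n y + g y)
       (fun y => (besselI (n - 1) y + besselI (n + 1) y) / 2 + dg y) 0 x Hx).
    assert (Hmain : besselI n 0 + g 0 <= besselI n x + g x).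
    { apply H.
      - intros y _. eexists. apply (is_derive_plus (besselI n) g). apply I_deriv. apply Hg.
      - intros y _. apply (is_derive_plus (besselI n) g). apply I_deriv. apply Hg.
      - intros y Hy. unfold dg.
        assert (H1 := IH (n - 1)%Z y ltac:(lra)).
        assert (H2 := IH (n + 1)%Z y ltac:(lra)).
        assert (0 < exp y) by apply exp_pos.
        assert (0 <= y ^ S N / c).
        { unfold Rdiv. apply Rmult_le_pos. apply pow_le; lra.
          left; apply Rinv_0_lt_compat; rewrite Hc; nra. }
        assert (0 <= exp y * (y ^ S N / c)) by nra.
        nra. }
    assert (H0 := I_at0 n).
    assert (Hg0 : g 0 = 0) by (unfold g; simpl; rewrite Rmult_0_l; field; rewrite Hc; nra).
    rewrite Hg0 in Hmain. unfold g in Hmain. fold c. lra.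
Qed.

Lemma I_pos n x : 0 <= x -> 0 <= besselI n x.
Proof.
  intros Hx. destruct (Rle_dec 0 (besselI n x)) as [H|H]; auto.
  exfalso. apply Rnot_le_lt in H.
  set (eps := - besselI n x / exp x).
  assert (Hexp := exp_pos x).
  assert (Heps : 0 < eps) by (unfold eps; unfold Rdiv; apply Rmult_lt_0_compat; [lra| apply Rinv_0_lt_compat; lra]).
  destruct (cv_speed_pow_fact x eps Heps) as [N HN].
  specialize (HN N (le_n N)). unfold Rdist in HN. rewrite Rminus_0_r in HN.
  apply Rabs_def2 in HN. destruct HN as [HN _].
  assert (HL := I_lower N n x Hx).
  assert (- (x ^ N / INR (fact N)) * exp x > - eps * exp x) by nra.
  assert (E : - eps * exp x = besselI n x) by (unfold eps; field; lra). lra.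
Qed.

Lemma I_mono n a b : 0 <= a -> a <= b -> besselI n a <= besselI n b.
Proof.
  intros Ha Hab.
  apply (mono_deriv (besselI n) (fun y => (besselI (n - 1) y + besselI (n + 1) y) / 2)); auto.
  - intros; apply ex_derive_I.
  - intros; apply I_deriv.
  - intros y Hy. assert (H1 := I_pos (n-1) y ltac:(lra)). assert (H2 := I_pos (n+1) y ltac:(lra)). lra.
Qed.


Lemma is_derive_mult_R (f g : R -> R) x df dg :
  is_derive f x df -> is_derive g x dg -> is_derive (fun y => f y * g y) x (df * g x + f x * dg).
Proof. intros; apply (is_derive_mult f g); auto. intros; apply Rmult_comm. Qed.

Lemma is_derive_plus_R (f g : R -> R) x df dg :
  is_derive f x df -> is_derive g x dg -> is_derive (fun y => f y + g y) x (df + dg).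
Proof. intros; apply (is_derive_plus f g); auto. Qed.

Lemma is_derive_val (f : R -> R) x d d' : d = d' -> is_derive f x d -> is_derive f x d'.
Proof. intros ->; auto. Qed.

Lemma exp_mkln (k : nat) y : 0 < y -> exp (- INR k * ln y) = / y ^ k.
Proof.
  intros Hy. replace (- INR k * ln y) with (- (INR k * ln y)) by ring.
  rewrite exp_Ropp. f_equal. rewrite <- Rpower_pow by auto. reflexivity.
Qed.

Lemma I_ratio (k : nat) t s : 0 < t -> t <= s ->
  besselI (Z.of_nat k) t * s ^ k <= besselI (Z.of_nat k) s * t ^ k.
Proof.
  intros Ht Hts.
  set (n := Z.of_nat k).
  set (E := fun y => exp (- INR k * ln y)).
  assert (HE : forall y, 0 < y -> is_derive E y (- INR k / y * E y)).
  { intros y Hy. unfold E. auto_derive. auto. field. lra. }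
  assert (HD : forall y, 0 < y -> is_derive (fun y => besselI n y * E y) y (besselI (n + 1) y * E y)).
  { intros y Hy. eapply is_derive_val; [| apply is_derive_mult_R; [apply I_deriv | apply HE; auto]].
    assert (R := I_rec n y). unfold n in R |- *. rewrite <- INR_IZR_INZ in R.
    apply (Rmult_eq_reg_l (2 * y)); [| lra].
    replace (2 * y * ((besselI (Z.of_nat k - 1) y + besselI (Z.of_nat k + 1) y) / 2 * E y +
      besselI (Z.of_nat k) y * (- INR k / y * E y))) with
      (E y * (y * (besselI (Z.of_nat k - 1) y + besselI (Z.of_nat k + 1) y) - 2 * INR k * besselI (Z.of_nat k) y)) by (field; lra).
    rewrite R. ring. }
  assert (H := mono_deriv (fun y => besselI n y * E y)
     (fun y => besselI (n + 1) y * E y) t s Hts).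
  assert (Hmain : besselI n t * E t <= besselI n s * E s).
  { apply H.
    - intros y Hy. eexists. apply HD; lra.
    - intros y Hy. apply HD; lra.
    - intros y Hy. apply Rmult_le_pos. apply I_pos; lra. left; apply exp_pos. }
  unfold E in Hmain. rewrite !exp_mkln in Hmain by lra.
  assert (0 < t ^ k) by (apply pow_lt; lra).
  assert (0 < s ^ k) by (apply pow_lt; lra).
  apply (Rmult_le_reg_r (/ t ^ k * / s ^ k)).
  apply Rmult_lt_0_compat; apply Rinv_0_lt_compat; auto.
  replace (besselI n t * s ^ k * (/ t ^ k * / s ^ k)) with (besselI n t * / t ^ k) by (field; lra).
  replace (besselI n s * t ^ k * (/ t ^ k * / s ^ k)) with (besselI n s * / s ^ k) by (field; lra).
  auto.
Qed.

Lemma I_small (k : nat) u : 0 <= u ->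
  besselI (Z.of_nat k) u <= (u / 2) ^ k / INR (fact k) * exp u.
Proof.
  intros Hu. induction k as [|k IH].
  - simpl. assert (H := I_abs 0 u). rewrite (Rabs_right u) in H by lra.
    apply Rabs_le_between in H. lra.
  - assert (R := I_rec (Z.of_nat (S k)) u).
    replace (Z.of_nat (S k) - 1)%Z with (Z.of_nat k) in R by lia.
    assert (P := I_pos (Z.of_nat (S k) + 1) u Hu).
    rewrite <- INR_IZR_INZ in R.
    rewrite fact_simpl, mult_INR. cbn [pow].
    assert (HS : 0 < INR (S k)) by (apply lt_0_INR; lia).
    assert (HF := INR_fact_pos k).
    apply (Rmult_le_reg_l (2 * INR (S k))); [lra|].
    rewrite R.
    replace (2 * INR (S k) * (u / 2 * (u / 2) ^ k / (INR (S k) * INR (fact k)) * exp u))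
      with (u * ((u / 2) ^ k / INR (fact k) * exp u)) by (field; lra).
    nra.
Qed.


Lemma RInt_mono_B (f : R -> R) B B' :
  (forall a b, ex_RInt f a b) -> (forall x, 0 <= x -> 0 <= f x) ->
  0 <= B -> B <= B' -> RInt f 0 B <= RInt f 0 B'.
Proof.
  intros Hex Hpos HB HBB.
  rewrite <- (RInt_Chasles (V:=R_CompleteNormedModule) f 0 B B') by auto.
  assert (0 <= RInt f B B') by (apply RInt_ge_0; auto; intros; apply Hpos; lra).
  unfold plus; simpl. lra.
Qed.

Lemma RInt_gen_lub (f : R -> R) (C : R) :
  (forall a b, ex_RInt f a b) ->
  (forall x, 0 <= x -> 0 <= f x) ->
  (forall B, 0 <= B -> RInt f 0 B <= C) ->
  is_lub (fun y => exists B, 0 <= B /\ y = RInt f 0 B)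
    (RInt_gen f (at_point 0) (Rbar_locally p_infty)).
Proof.
  intros Hex Hpos HC.
  set (E := fun y => exists B, 0 <= B /\ y = RInt f 0 B).
  assert (Hb : bound E) by (exists C; intros y [B [HB ->]]; auto).
  assert (Hne : exists y, E y) by (exists (RInt f 0 0); exists 0; split; [lra|auto]).
  destruct (completeness E Hb Hne) as [L HL].
  replace (RInt_gen f (at_point 0) (Rbar_locally p_infty)) with L; auto.
  symmetry. apply (is_RInt_gen_unique (V:=R_CompleteNormedModule)).
  intros P [eps Heps].
  assert (HB0 : exists B0, 0 <= B0 /\ L - eps < RInt f 0 B0).
  { destruct (Classical_Prop.classic (exists B0, 0 <= B0 /\ L - eps < RInt f 0 B0)) as [H|H]; auto.
    exfalso. assert (is_upper_bound E (L - eps)).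
    { intros y [B [HB ->]]. destruct (Rle_dec (RInt f 0 B) (L - eps)); auto.
      exfalso. apply H. exists B. split; auto. lra. }
    destruct HL as [_ HL]. specialize (HL _ H0). destruct eps; simpl in *. lra. }
  destruct HB0 as [B0 [HB0 HB0']].
  apply (Filter_prod _ _ _ (fun a => a = 0) (fun b => B0 < b)).
  - reflexivity.
  - exists B0. auto.
  - intros a b -> Hb'. simpl. exists (RInt f 0 b). split.
    + apply RInt_correct_R. auto.
    + apply Heps. unfold ball; simpl; unfold AbsRing_ball, abs, minus, plus, opp; simpl.
      assert (RInt f 0 B0 <= RInt f 0 b) by (apply RInt_mono_B; auto; lra).
      assert (RInt f 0 b <= L) by (destruct HL as [HL _]; apply HL; exists b; split; auto; lra).
      apply Rabs_def1; lra.
Qed.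


Definition fK (nu : Z) (x a : R) := exp (- x * cosh a) * cosh (IZR nu * a).

Lemma besselK_eq nu x : besselK nu x = RInt_gen (fK nu x) (at_point 0) (Rbar_locally p_infty).
Proof. reflexivity. Qed.

Lemma ex_RInt_fK nu x a b : ex_RInt (fK nu x) a b.
Proof. apply ex_RInt_der. intros z. unfold fK, cosh. auto_derive. auto. Qed.

Lemma cosh_pos z : 0 < cosh z.
Proof. unfold cosh. assert (H1 := exp_pos z). assert (H2 := exp_pos (- z)). lra. Qed.

Lemma fK_pos nu x a : 0 < fK nu x a.
Proof. unfold fK. apply Rmult_lt_0_compat. apply exp_pos. apply cosh_pos. Qed.

Lemma exp_INR_mult n a : exp (INR n * a) = exp a ^ n.
Proof.
  induction n. simpl. rewrite Rmult_0_l. apply exp_0.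
  rewrite S_INR. replace ((INR n + 1) * a) with (a + INR n * a) by ring.
  rewrite exp_plus, IHn. simpl. ring.
Qed.

Lemma pow_le_exp (j : nat) y : 0 <= y -> y ^ j / INR (fact j) <= exp y.
Proof.
  revert y. induction j as [|j IH]; intros y Hy.
  - simpl. assert (H := exp_ineq1_le y). lra.
  - assert (H := mono_deriv (fun z => exp z - z ^ S j / INR (fact (S j)))
                 (fun z => exp z - z ^ j / INR (fact j)) 0 y Hy).
    assert (HF := INR_fact_pos j).
    assert (HS : 0 < INR (S j)) by (apply lt_0_INR; lia).
    assert (Hd : forall z : R, is_derive (fun z => exp z - z ^ S j / INR (fact (S j))) z
                   (exp z - z ^ j / INR (fact j))).
    { intros z. auto_derive. auto. replace (fact j + j * fact j)%nat with (S j * fact j)%nat by (simpl; lia). rewrite mult_INR.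
      change (match j with O => 1 | S _ => INR j + 1 end) with (INR (S j)). field. lra. }
    assert (exp 0 - 0 ^ S j / INR (fact (S j)) <= exp y - y ^ S j / INR (fact (S j))).
    { apply H.
      - intros; eexists; apply Hd.
      - intros; apply Hd.
      - intros z Hz. assert (I1 := IH z ltac:(lra)). lra. }
    rewrite exp_0 in H0. replace (0 ^ S j / INR (fact (S j))) with 0 in H0 by (cbn [pow]; unfold Rdiv; ring).
    lra.
Qed.

Lemma cosh_le_exp (nu : Z) a : 0 <= a -> cosh (IZR nu * a) <= exp (INR (Z.abs_nat nu) * a).
Proof.
  intros Ha. unfold cosh.
  assert (E : INR (Z.abs_nat nu) = Rabs (IZR nu)).
  { rewrite INR_IZR_INZ, Nat2Z.inj_abs_nat, abs_IZR. reflexivity. }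
  rewrite E. destruct (Rle_dec 0 (IZR nu)).
  - rewrite Rabs_right by lra.
    assert (exp (- (IZR nu * a)) <= exp (IZR nu * a)) by (apply exp_le; nra). lra.
  - rewrite Rabs_left by lra.
    assert (exp (IZR nu * a) <= exp (- IZR nu * a)) by (apply exp_le; nra).
    replace (- (IZR nu * a)) with (- IZR nu * a) by ring. lra.
Qed.

Lemma fK_bound nu x a : 0 < x -> 0 <= a ->
  fK nu x a <= INR (fact (S (Z.abs_nat nu))) * (2 / x) ^ S (Z.abs_nat nu) * exp (- a).
Proof.
  intros Hx Ha. set (m := Z.abs_nat nu). unfold fK.
  assert (H1 := cosh_le_exp nu a Ha). fold m in H1.
  assert (Hc : exp a / 2 <= cosh a) by (unfold cosh; assert (H := exp_pos (- a)); lra).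
  assert (H2 : exp (- x * cosh a) <= exp (- (x * exp a / 2))) by (apply exp_le; nra).
  set (z := exp a). assert (Hz : 0 < z) by apply exp_pos.
  assert (H3 := pow_le_exp (S m) (x * z / 2) ltac:(nra)).
  assert (HF := INR_fact_pos (S m)).
  assert (E1 : exp (INR m * a) = z ^ m) by apply exp_INR_mult.
  assert (E2 : exp (- a) = / z) by (apply exp_Ropp).
  rewrite E1 in H1. rewrite E2.
  assert (H4 : exp (- (x * z / 2)) * exp (x * z / 2) = 1).
  { rewrite <- exp_plus. replace (- (x * z / 2) + x * z / 2) with 0 by ring. apply exp_0. }
  assert (H5 : z ^ S m <= INR (fact (S m)) * (2 / x) ^ S m * exp (x * z / 2)).
  { assert (Hinv : (2/x)^S m * (x/2)^S m = 1).
    { rewrite <- Rpow_mult_distr. replace (2/x*(x/2)) with 1 by (field; lra). apply pow1. }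
    assert (0 < (x/2) ^ S m) by (apply pow_lt; lra).
    replace ((x * z / 2) ^ S m) with ((x/2) ^ S m * z ^ S m) in H3 by (rewrite <- Rpow_mult_distr; f_equal; field).
    apply (Rmult_le_reg_l ((x/2) ^ S m)); auto.
    replace ((x / 2) ^ S m * (INR (fact (S m)) * (2 / x) ^ S m * exp (x * z / 2)))
      with (INR (fact (S m)) * exp (x * z / 2) * ((2/x)^S m * (x/2)^S m)) by ring.
    rewrite Hinv, Rmult_1_r.
    apply (Rmult_le_reg_r (/ INR (fact (S m)))). apply Rinv_0_lt_compat; auto.
    replace (INR (fact (S m)) * exp (x * z / 2) * / INR (fact (S m))) with (exp (x * z / 2)) by (field; lra).
    unfold Rdiv in H3. lra. }
  assert (0 < exp (- x * cosh a)) by apply exp_pos.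
  assert (0 <= cosh (IZR nu * a)) by (left; apply cosh_pos).
  assert (0 < exp (- (x * z / 2))) by apply exp_pos.
  assert (0 < z ^ m) by (apply pow_lt; auto).
  apply (Rmult_le_reg_r z); auto.
  replace (INR (fact (S m)) * (2 / x) ^ S m * / z * z) with (INR (fact (S m)) * (2 / x) ^ S m) by (field; lra).
  apply Rle_trans with (exp (- (x * z / 2)) * z ^ S m).
  { simpl. assert (exp (- x * cosh a) * cosh (IZR nu * a) <= exp (- (x * z / 2)) * z ^ m).
    { apply Rle_trans with (exp (- (x * z / 2)) * cosh (IZR nu * a)).
      apply Rmult_le_compat_r; [lra | exact H2]. apply Rmult_le_compat_l; [lra | exact H1]. }
    replace (exp (- (x * z / 2)) * (z * z ^ m)) with (exp (- (x * z / 2)) * z ^ m * z) by ring.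
    apply Rmult_le_compat_r; lra. }
  apply (Rmult_le_reg_r (exp (x * z / 2))). apply exp_pos.
  replace (exp (- (x * z / 2)) * z ^ S m * exp (x * z / 2)) with (z ^ S m * (exp (- (x * z / 2)) * exp (x * z / 2))) by ring.
  rewrite H4. lra.
Qed.


Lemma RInt_scal_R (f : R -> R) c a b : ex_RInt f a b -> RInt (fun t => c * f t) a b = c * RInt f a b.
Proof. intros H. apply RInt_unique_R. apply is_RInt_R_scal. apply RInt_correct_R. auto. Qed.

Lemma kB_bound nu x B : 0 < x -> 0 <= B ->
  RInt (fK nu x) 0 B <= INR (fact (S (Z.abs_nat nu))) * (2 / x) ^ S (Z.abs_nat nu).
Proof.
  intros Hx HB. set (C0 := INR (fact (S (Z.abs_nat nu))) * (2 / x) ^ S (Z.abs_nat nu)).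
  assert (HC0 : 0 < C0) by (unfold C0; apply Rmult_lt_0_compat; [apply INR_fact_pos | apply pow_lt; unfold Rdiv; apply Rmult_lt_0_compat; [lra | apply Rinv_0_lt_compat; lra]]).
  apply Rle_trans with (RInt (fun a => C0 * exp (- a)) 0 B).
  - apply RInt_le; auto. apply ex_RInt_fK. apply ex_RInt_der. intros; auto_derive; auto.
    intros a Ha. apply fK_bound; lra.
  - assert (H : is_RInt (fun a => C0 * exp (- a)) 0 B (minus (- C0 * exp (- B)) (- C0 * exp (- 0)))).
    { apply (is_RInt_derive (V:=R_CompleteNormedModule) (fun a => - C0 * exp (- a))).
      - intros a _. auto_derive. auto. ring.
      - intros a _. apply (ex_derive_continuous (V:=R_NormedModule)). auto_derive. auto. }
    apply RInt_unique_R in H. rewrite H. unfold minus, plus, opp; simpl.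
    rewrite Ropp_0, exp_0. assert (0 < exp (- B)) by apply exp_pos. nra.
Qed.

Lemma K_lub nu x : 0 < x ->
  is_lub (fun y => exists B, 0 <= B /\ y = RInt (fK nu x) 0 B) (besselK nu x).
Proof.
  intros Hx. rewrite besselK_eq.
  apply (RInt_gen_lub _ (INR (fact (S (Z.abs_nat nu))) * (2 / x) ^ S (Z.abs_nat nu))).
  - apply ex_RInt_fK.
  - intros; left; apply fK_pos.
  - intros; apply kB_bound; auto.
Qed.

Lemma K_ge_kB nu x B : 0 < x -> 0 <= B -> RInt (fK nu x) 0 B <= besselK nu x.
Proof. intros Hx HB. destruct (K_lub nu x Hx) as [H _]. apply H. exists B; auto. Qed.

Lemma K_le nu x L : 0 < x -> (forall B, 0 <= B -> RInt (fK nu x) 0 B <= L) -> besselK nu x <= L.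
Proof.
  intros Hx H. destruct (K_lub nu x Hx) as [_ H2]. apply H2.
  intros y [B [HB ->]]. auto.
Qed.

Lemma K_nonneg nu x : 0 < x -> 0 <= besselK nu x.
Proof.
  intros Hx. apply Rle_trans with (RInt (fK nu x) 0 0). rewrite RInt_point. right; reflexivity.
  apply K_ge_kB; lra.
Qed.

Lemma K_approx nu x eps : 0 < x -> 0 < eps ->
  exists B0, 0 <= B0 /\ forall B, B0 <= B -> besselK nu x - eps <= RInt (fK nu x) 0 B.
Proof.
  intros Hx He.
  destruct (Classical_Prop.classic (exists B0, 0 <= B0 /\ besselK nu x - eps < RInt (fK nu x) 0 B0)) as [[B0 [HB0 H]]|H].
  - exists B0. split; auto. intros B HB.
    assert (RInt (fK nu x) 0 B0 <= RInt (fK nu x) 0 B).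
    { apply RInt_mono_B; [apply ex_RInt_fK | intros; left; apply fK_pos | auto | auto]. }
    lra.
  - exfalso. assert (besselK nu x <= besselK nu x - eps); [|lra].
    apply K_le; auto. intros B HB. destruct (Rle_dec (RInt (fK nu x) 0 B) (besselK nu x - eps)); auto.
    exfalso; apply H. exists B. split; auto. lra.
Qed.

Lemma cosh_mono p q : 0 <= p -> p <= q -> cosh p <= cosh q.
Proof.
  intros Hp Hpq. unfold cosh. rewrite !exp_Ropp.
  assert (H1 : exp p <= exp q) by (apply exp_le; lra).
  assert (H2 : 1 <= exp p) by (rewrite <- exp_0; apply exp_le; lra).
  set (A := exp p) in *. set (B := exp q) in *.
  assert (E : (B + / B) / 2 - (A + / A) / 2 = (B - A) * (A * B - 1) / (2 * A * B)) by (field; lra).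
  assert (0 <= (B - A) * (A * B - 1) / (2 * A * B)).
  { unfold Rdiv. apply Rmult_le_pos. apply Rmult_le_pos; nra. left; apply Rinv_0_lt_compat; nra. }
  lra.
Qed.

Lemma cosh_even p : cosh (- p) = cosh p.
Proof. unfold cosh. rewrite Ropp_involutive. field. Qed.

Lemma cosh_abs_le p q : Rabs p <= Rabs q -> cosh p <= cosh q.
Proof.
  intros H.
  assert (cosh p = cosh (Rabs p)) by (destruct (Rle_dec 0 p); [rewrite Rabs_right by lra; auto | rewrite Rabs_left by lra; rewrite cosh_even; auto]).
  assert (cosh q = cosh (Rabs q)) by (destruct (Rle_dec 0 q); [rewrite Rabs_right by lra; auto | rewrite Rabs_left by lra; rewrite cosh_even; auto]).
  rewrite H0, H1. apply cosh_mono; auto. apply Rabs_pos.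
Qed.

Lemma K_order nu mu x : 0 < x -> (Z.abs nu <= Z.abs mu)%Z -> besselK nu x <= besselK mu x.
Proof.
  intros Hx Hnm. apply K_le; auto. intros B HB.
  apply Rle_trans with (RInt (fK mu x) 0 B); [| apply K_ge_kB; auto].
  apply RInt_le; auto; try apply ex_RInt_fK.
  intros a Ha. unfold fK. apply Rmult_le_compat_l. left; apply exp_pos.
  apply cosh_abs_le. rewrite !Rabs_mult, (Rabs_right a) by lra. apply Rmult_le_compat_r; [lra|].
  rewrite <- !abs_IZR. apply IZR_le. auto.
Qed.

Lemma K_exp_decr nu s s' : 0 < s -> s <= s' -> exp s' * besselK nu s' <= exp s * besselK nu s.
Proof.
  intros Hs Hss.
  assert (Hpos : 0 < exp s') by apply exp_pos.
  cut (besselK nu s' <= exp (s - s') * besselK nu s).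
  { intros H. replace (exp s * besselK nu s) with (exp s' * (exp (s - s') * besselK nu s)).
    apply Rmult_le_compat_l; lra.
    rewrite <- Rmult_assoc, <- exp_plus. replace (s' + (s - s')) with s by ring. auto. }
  apply K_le; [lra|]. intros B HB.
  apply Rle_trans with (RInt (fun a => exp (s - s') * fK nu s a) 0 B).
  - apply RInt_le; auto. apply ex_RInt_fK. apply ex_RInt_der. intros z. unfold fK, cosh. auto_derive. auto.
    intros a Ha. unfold fK. rewrite <- Rmult_assoc, <- exp_plus.
    apply Rmult_le_compat_r. left; apply cosh_pos. apply exp_le.
    assert (1 <= cosh a) by (rewrite <- cosh_0; apply cosh_mono; lra). nra.
  - rewrite RInt_scal_R by apply ex_RInt_fK. apply Rmult_le_compat_l. left; apply exp_pos.
    apply K_ge_kB; auto.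
Qed.

Lemma K_decr nu s s' : 0 < s -> s <= s' -> besselK nu s' <= besselK nu s.
Proof.
  intros Hs Hss. assert (H := K_exp_decr nu s s' Hs Hss).
  assert (exp s <= exp s') by (apply exp_le; auto).
  assert (0 <= besselK nu s) by (apply K_nonneg; auto).
  assert (0 < exp s) by apply exp_pos. nra.
Qed.


Lemma cosh_prod (nu : Z) a : cosh a * cosh (IZR nu * a) =
  (cosh (IZR (nu + 1) * a) + cosh (IZR (nu - 1) * a)) / 2.
Proof.
  rewrite plus_IZR, minus_IZR. unfold cosh.
  replace ((IZR nu + 1) * a) with (IZR nu * a + a) by ring.
  replace ((IZR nu - 1) * a) with (IZR nu * a + - a) by ring.
  replace (- (IZR nu * a + a)) with (- (IZR nu * a) + - a) by ring.
  replace (- (IZR nu * a + - a)) with (- (IZR nu * a) + a) by ring.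
  rewrite !exp_plus. field.
Qed.

Lemma sinh_prod (nu : Z) a : sinh a * sinh (IZR nu * a) =
  (cosh (IZR (nu + 1) * a) - cosh (IZR (nu - 1) * a)) / 2.
Proof.
  rewrite plus_IZR, minus_IZR. unfold cosh, sinh.
  replace ((IZR nu + 1) * a) with (IZR nu * a + a) by ring.
  replace ((IZR nu - 1) * a) with (IZR nu * a + - a) by ring.
  replace (- (IZR nu * a + a)) with (- (IZR nu * a) + - a) by ring.
  replace (- (IZR nu * a + - a)) with (- (IZR nu * a) + a) by ring.
  rewrite !exp_plus. field.
Qed.

Lemma cosh_prod_le (nu : Z) a : 0 <= a ->
  cosh a * cosh (IZR nu * a) <= cosh (IZR (Z.abs nu + 1) * a).
Proof.
  intros Ha. rewrite cosh_prod.
  assert (H1 : cosh (IZR (nu + 1) * a) <= cosh (IZR (Z.abs nu + 1) * a)).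
  { apply cosh_abs_le. rewrite !Rabs_mult, (Rabs_right a) by lra.
    apply Rmult_le_compat_r; [lra|]. rewrite <- !abs_IZR. apply IZR_le. lia. }
  assert (H2 : cosh (IZR (nu - 1) * a) <= cosh (IZR (Z.abs nu + 1) * a)).
  { apply cosh_abs_le. rewrite !Rabs_mult, (Rabs_right a) by lra.
    apply Rmult_le_compat_r; [lra|]. rewrite <- !abs_IZR. apply IZR_le. lia. }
  lra.
Qed.

Lemma fK_lip nu s s' a : 0 < s -> s <= s' -> 0 <= a ->
  fK nu s a <= fK nu s' a + (s' - s) * fK (Z.abs nu + 1) s a.
Proof.
  intros Hs Hss Ha. unfold fK.
  assert (Hc : 1 <= cosh a) by (rewrite <- cosh_0; apply cosh_mono; lra).
  assert (E : exp (- s' * cosh a) = exp (- s * cosh a) * exp (- ((s' - s) * cosh a))).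
  { rewrite <- exp_plus. f_equal. ring. }
  assert (H1 := exp_ineq1_le (- ((s' - s) * cosh a))).
  assert (H2 := cosh_prod_le nu a Ha).
  assert (0 < exp (- s * cosh a)) by apply exp_pos.
  assert (0 < cosh (IZR nu * a)) by apply cosh_pos.
  rewrite E.
  set (e := exp (- s * cosh a)) in *. set (c := cosh a) in *. set (cn := cosh (IZR nu * a)) in *.
  set (d := exp (- ((s' - s) * c))) in *.
  assert (e * cn * (s' - s) * c <= (s' - s) * (e * cosh (IZR (Z.abs nu + 1) * a))).
  { replace (e * cn * (s' - s) * c) with ((s' - s) * (e * (c * cn))) by ring.
    apply Rmult_le_compat_l; [lra|]. apply Rmult_le_compat_l; lra. }
  assert (e * cn <= e * d * cn + e * cn * (s' - s) * c).
  { assert (e * cn * (1 + - ((s' - s) * c)) <= e * cn * d) by (apply Rmult_le_compat_l; nra).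
    nra. }
  lra.
Qed.

Lemma K_lip nu s s' : 0 < s -> s <= s' ->
  besselK nu s <= besselK nu s' + (s' - s) * besselK (Z.abs nu + 1) s.
Proof.
  intros Hs Hss.
  apply Rnot_lt_le. intros Hlt.
  set (eps := (besselK nu s - (besselK nu s' + (s' - s) * besselK (Z.abs nu + 1) s)) / 2).
  assert (Heps : 0 < eps) by (unfold eps; lra).
  destruct (K_approx nu s eps Hs Heps) as [B [HB HBa]].
  specialize (HBa B (Rle_refl B)).
  assert (H1 : RInt (fK nu s) 0 B <= RInt (fun a => fK nu s' a + (s' - s) * fK (Z.abs nu + 1) s a) 0 B).
  { apply RInt_le; auto. apply ex_RInt_fK.
    apply (ex_RInt_plus (V:=R_NormedModule) (fK nu s') (fun a => (s' - s) * fK (Z.abs nu + 1) s a)).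
    apply ex_RInt_fK. apply (ex_RInt_scal (V:=R_NormedModule) (fK (Z.abs nu + 1) s)). apply ex_RInt_fK.
    intros a Ha. apply fK_lip; lra. }
  assert (H2 : RInt (fun a => fK nu s' a + (s' - s) * fK (Z.abs nu + 1) s a) 0 B =
     RInt (fK nu s') 0 B + (s' - s) * RInt (fK (Z.abs nu + 1) s) 0 B).
  { apply RInt_unique_R. apply is_RInt_R_plus. apply RInt_correct_R, ex_RInt_fK.
    apply is_RInt_R_scal. apply RInt_correct_R, ex_RInt_fK. }
  assert (H3 := K_ge_kB nu s' B ltac:(lra) HB).
  assert (H4 := K_ge_kB (Z.abs nu + 1) s B ltac:(lra) HB).
  assert (H5 : (s' - s) * RInt (fK (Z.abs nu + 1) s) 0 B <= (s' - s) * besselK (Z.abs nu + 1) s)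
    by (apply Rmult_le_compat_l; lra).
  unfold eps in HBa. lra.
Qed.

Lemma K_cont nu s0 : 0 < s0 -> continuity_pt (besselK nu) s0.
Proof.
  intros Hs0. unfold continuity_pt, continue_in, limit1_in, limit_in. simpl.
  intros eps Heps.
  set (L := besselK (Z.abs nu + 1) (s0 / 2)).
  assert (HL : 0 <= L) by (apply K_nonneg; lra).
  exists (Rmin (s0 / 2) (eps / (L + 1))). split.
  { apply Rmin_pos. lra. apply Rdiv_lt_0_compat; lra. }
  intros x [_ Hx]. unfold R_dist in *.
  assert (Hd1 : Rabs (x - s0) < s0 / 2) by (apply Rlt_le_trans with (1 := Hx); apply Rmin_l).
  assert (Hd2 : Rabs (x - s0) < eps / (L + 1)) by (apply Rlt_le_trans with (1 := Hx); apply Rmin_r).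
  apply Rabs_def2 in Hd1.
  assert (HLe : Rabs (x - s0) * L < eps).
  { apply Rle_lt_trans with (eps / (L + 1) * L).
    apply Rmult_le_compat_r; [lra|]. left; auto.
    apply (Rmult_lt_reg_r (L + 1)); [lra|].
    replace (eps / (L + 1) * L * (L + 1)) with (eps * L) by (field; lra). nra. }
  destruct (Rle_dec x s0) as [Hle|Hgt].
  - assert (H1 := K_lip nu x s0 ltac:(lra) Hle).
    assert (H2 := K_decr nu x s0 ltac:(lra) Hle).
    assert (H3 : besselK (Z.abs nu + 1) x <= L) by (apply K_decr; lra).
    rewrite Rabs_left1 in HLe by lra.
    rewrite Rabs_right by lra. nra.
  - assert (H1 := K_lip nu s0 x ltac:(lra) ltac:(lra)).
    assert (H2 := K_decr nu s0 x ltac:(lra) ltac:(lra)).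
    assert (H3 : besselK (Z.abs nu + 1) s0 <= L) by (apply K_decr; lra).
    rewrite Rabs_right in HLe by lra.
    rewrite Rabs_left1 by lra. nra.
Qed.


Lemma cont_cosh z : continuity_pt cosh z.
Proof. apply derivable_continuous_pt, derivable_pt_cosh. Qed.

Lemma RInt_neg_half_sum (f g h : R -> R) a b :
  ex_RInt g a b -> ex_RInt h a b ->
  (forall t, f t = - ((g t + h t) / 2)) ->
  RInt f a b = - ((RInt g a b + RInt h a b) / 2).
Proof.
  intros Hg Hh Hf. apply RInt_unique_R.
  assert (E : forall y : R, - / 2 * y = - (y / 2)) by (intros; field).
  apply (is_RInt_ext (fun t => (- / 2) * (g t + h t))).
  { intros t _. rewrite Hf. apply E. }
  replace (- ((RInt g a b + RInt h a b) / 2)) with (- / 2 * (RInt g a b + RInt h a b))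
    by (first [apply E | symmetry; apply E]).
  apply is_RInt_R_scal, is_RInt_R_plus; apply RInt_correct_R; auto.
Qed.

Lemma kt_deriv nu B x :
  is_derive (fun x => RInt (fK nu x) 0 B) x
    (- ((RInt (fK (nu - 1) x) 0 B + RInt (fK (nu + 1) x) 0 B) / 2)).
Proof.
  assert (HD : forall u v, Derive (fun z => exp (- z * cosh v) * cosh (IZR nu * v)) u
                = - (cosh v * exp (- u * cosh v) * cosh (IZR nu * v))).
  { intros u v. apply is_derive_unique. auto_derive. auto. ring. }
  assert (H := is_derive_RInt_param (fun u t => exp (- u * cosh t) * cosh (IZR nu * t)) 0 B x).
  simpl in H.
  rewrite (RInt_ext _ (fun t => - (cosh t * exp (- x * cosh t) * cosh (IZR nu * t)))) in H.
  2:{ intros t _. apply HD. }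
  rewrite (RInt_neg_half_sum _ (fK (nu - 1) x) (fK (nu + 1) x)) in H.
  - apply H.
    + apply filter_forall. intros x0 t _. auto_derive. auto.
    + intros t _. apply (continuity_2d_pt_ext (fun u v => - (cosh v * exp (- u * cosh v) * cosh (IZR nu * v)))).
      { intros; symmetry; apply HD. }
      apply continuity_2d_pt_opp.
      apply continuity_2d_pt_mult.
      * apply continuity_2d_pt_mult.
        -- apply (continuity_1d_2d_pt_comp cosh (fun _ v => v)). apply cont_cosh.
           apply continuity_2d_pt_id2.
        -- apply (continuity_1d_2d_pt_comp exp (fun u v => - u * cosh v)). apply derivable_continuous_pt, derivable_pt_exp.
           apply continuity_2d_pt_mult.
           apply (continuity_2d_pt_opp (fun u _ => u)). apply continuity_2d_pt_id1.
           apply (continuity_1d_2d_pt_comp cosh (fun _ v => v)). apply cont_cosh.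
           apply continuity_2d_pt_id2.
      * apply (continuity_1d_2d_pt_comp cosh (fun _ v => IZR nu * v)). apply cont_cosh.
        apply continuity_2d_pt_mult. apply continuity_2d_pt_const. apply continuity_2d_pt_id2.
    + apply filter_forall. intros y. apply (ex_RInt_fK nu y).
  - apply ex_RInt_fK.
  - apply ex_RInt_fK.
  - intros t. unfold fK.
    replace (cosh t * exp (- x * cosh t) * cosh (IZR nu * t)) with (exp (- x * cosh t) * (cosh t * cosh (IZR nu * t))) by ring.
    rewrite cosh_prod. field.
Qed.

Lemma kt_rec nu B x :
  IZR nu * RInt (fK nu x) 0 B = exp (- x * cosh B) * sinh (IZR nu * B)
    + x / 2 * (RInt (fK (nu + 1) x) 0 B - RInt (fK (nu - 1) x) 0 B).
Proof.
  set (F := fun a => exp (- x * cosh a) * sinh (IZR nu * a)).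
  set (dF0 := fun a => - x * sinh a * exp (- x * cosh a) * sinh (IZR nu * a)
                  + exp (- x * cosh a) * (IZR nu * cosh (IZR nu * a))).
  set (dF := fun a => IZR nu * fK nu x a - x * ((fK (nu + 1) x a - fK (nu - 1) x a) / 2)).
  assert (H1 : is_RInt dF0 0 B (minus (F B) (F 0))).
  { apply (is_RInt_derive (V:=R_CompleteNormedModule)).
    - intros a _. unfold F, dF0, cosh, sinh. auto_derive. auto. unfold Rdiv. field.
    - intros a _. unfold dF0, cosh, sinh.
      apply (ex_derive_continuous (V:=R_NormedModule)). auto_derive. auto. }
  assert (HdF : forall a, dF0 a = dF a).
  { intros a. unfold dF0, dF, fK.
    replace (- x * sinh a * exp (- x * cosh a) * sinh (IZR nu * a)) with
      (- x * exp (- x * cosh a) * (sinh a * sinh (IZR nu * a))) by ring.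
    rewrite sinh_prod. field. }
  apply (is_RInt_ext _ dF) in H1; [| intros; apply HdF].
  assert (H0 : minus (F B) (F 0) = exp (- x * cosh B) * sinh (IZR nu * B)).
  { unfold F. rewrite Rmult_0_r, sinh_0. unfold minus, plus, opp; simpl. ring. }
  rewrite H0 in H1.
  assert (H2 : is_RInt dF 0 B (IZR nu * RInt (fK nu x) 0 B
       - x * ((RInt (fK (nu + 1) x) 0 B - RInt (fK (nu - 1) x) 0 B) / 2))).
  { apply is_RInt_R_minus.
    - apply is_RInt_R_scal. apply RInt_correct_R, ex_RInt_fK.
    - apply is_RInt_R_scal.
      apply (is_RInt_ext (fun a => / 2 * (fK (nu + 1) x a - fK (nu - 1) x a))).
      { intros; apply Rmult_comm. }
      replace ((RInt (fK (nu + 1) x) 0 B - RInt (fK (nu - 1) x) 0 B) / 2) with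
        (/2 * (RInt (fK (nu + 1) x) 0 B - RInt (fK (nu - 1) x) 0 B)) by field.
      apply is_RInt_R_scal, is_RInt_R_minus; apply RInt_correct_R, ex_RInt_fK. }
  apply RInt_unique_R in H1. apply RInt_unique_R in H2. rewrite H1 in H2.
  rewrite H2. field.
Qed.


Definition gam (n : nat) (a u : R) := u ^ n * exp (- a * u).

Lemma ex_RInt_gam n a x y : ex_RInt (gam n a) x y.
Proof. apply ex_RInt_der. intros z. unfold gam. auto_derive. auto. Qed.

Lemma gam_bound (n : nat) a x : 0 < a -> 0 <= x ->
  RInt (gam n a) 0 x <= INR (fact n) / a ^ S n.
Proof.
  intros Ha Hx. induction n as [|n IH].
  - assert (H : is_RInt (gam 0 a) 0 x (minus (- / a * exp (- a * x)) (- / a * exp (- a * 0)))).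
    { apply (is_RInt_derive (V:=R_CompleteNormedModule) (fun u => - / a * exp (- a * u))).
      - intros u _. unfold gam. auto_derive. auto. simpl. field. lra.
      - intros u _. unfold gam. apply (ex_derive_continuous (V:=R_NormedModule)). auto_derive. auto. }
    apply RInt_unique_R in H. rewrite H. unfold minus, plus, opp; simpl.
    rewrite Rmult_0_r, exp_0. assert (0 < exp (- a * x)) by apply exp_pos.
    assert (0 < / a) by (apply Rinv_0_lt_compat; lra).
    replace (1 / (a * 1)) with (/ a) by (field; lra). nra.
  - set (G := RInt (gam n a) 0 x) in *.
    assert (H : is_RInt (fun u => INR (S n) * gam n a u - a * gam (S n) a u) 0 x
                 (minus (x ^ S n * exp (- a * x)) (0 ^ S n * exp (- a * 0)))).
    { apply (is_RInt_derive (V:=R_CompleteNormedModule) (fun u => u ^ S n * exp (- a * u))).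
      - intros u _. unfold gam. auto_derive. auto.
        change (match n with O => 1 | S _ => INR n + 1 end) with (INR (S n)). cbn [pow]. ring.
      - intros u _. unfold gam. apply (ex_derive_continuous (V:=R_NormedModule)). auto_derive. auto. }
    assert (H2 : is_RInt (fun u => INR (S n) * gam n a u - a * gam (S n) a u) 0 x
                 (INR (S n) * G - a * RInt (gam (S n) a) 0 x)).
    { apply is_RInt_R_minus; apply is_RInt_R_scal; apply RInt_correct_R, ex_RInt_gam. }
    apply RInt_unique_R in H. apply RInt_unique_R in H2. rewrite H in H2.
    unfold minus, plus, opp in H2; simpl in H2.
    assert (0 <= x ^ S n * exp (- a * x)) by (apply Rmult_le_pos; [apply pow_le; lra | left; apply exp_pos]).
    cbn [pow] in H2. rewrite Rmult_0_l, Rmult_0_l in H2.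
    assert (Hb : a * RInt (gam (S n) a) 0 x <= INR (S n) * G).
    { cbn [pow] in H0. change (match n with O => 1 | S _ => INR n + 1 end) with (INR (S n)) in H2. lra. }
    assert (HS : 0 < INR (S n)) by (apply lt_0_INR; lia).
    assert (Han : 0 < a ^ S n) by (apply pow_lt; lra).
    apply (Rmult_le_reg_l a); auto.
    apply Rle_trans with (1 := Hb).
    rewrite fact_simpl, mult_INR.
    assert (0 < a ^ n) by (apply pow_lt; lra).
    replace (a * (INR (S n) * INR (fact n) / a ^ S (S n))) with (INR (S n) * (INR (fact n) / a ^ S n))
      by (cbn [pow]; field; repeat split; lra).
    apply Rmult_le_compat_l; lra.
Qed.


Definition ktf (nu : Z) (B x : R) := RInt (fK nu x) 0 B.

Lemma ktf_deriv nu B x : is_derive (ktf nu B) x (- ((ktf (nu - 1) B x + ktf (nu + 1) B x) / 2)).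
Proof. apply kt_deriv. Qed.

Definition Wf (nZ : Z) (B y : R) :=
  y * (besselI nZ y * ktf (nZ + 1) B y + besselI (nZ + 1) y * ktf nZ B y).

Lemma W_deriv_raw nZ B x : is_derive (Wf nZ B) x
  (1 * (besselI nZ x * ktf (nZ + 1) B x + besselI (nZ + 1) x * ktf nZ B x) +
   x * (((besselI (nZ - 1) x + besselI (nZ + 1) x) / 2 * ktf (nZ + 1) B x +
          besselI nZ x * (- ((ktf (nZ + 1 - 1) B x + ktf (nZ + 1 + 1) B x) / 2))) +
        ((besselI (nZ + 1 - 1) x + besselI (nZ + 1 + 1) x) / 2 * ktf nZ B x +
          besselI (nZ + 1) x * (- ((ktf (nZ - 1) B x + ktf (nZ + 1) B x) / 2))))).
Proof.
  unfold Wf.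
  apply (is_derive_mult_R (fun y => y) (fun y => besselI nZ y * ktf (nZ + 1) B y + besselI (nZ + 1) y * ktf nZ B y)).
  - apply (is_derive_id (K:=R_AbsRing)).
  - apply (is_derive_plus_R (fun y => besselI nZ y * ktf (nZ + 1) B y) (fun y => besselI (nZ + 1) y * ktf nZ B y)).
    + apply (is_derive_mult_R (besselI nZ) (ktf (nZ + 1) B)). apply I_deriv. apply ktf_deriv.
    + apply (is_derive_mult_R (besselI (nZ + 1)) (ktf nZ B)). apply I_deriv. apply ktf_deriv.
Qed.

Lemma W_deriv (nZ : Z) B x : 0 < x ->
  is_derive (Wf nZ B) x
   (besselI nZ x * (exp (- x * cosh B) * sinh (IZR (nZ + 1) * B))
    - besselI (nZ + 1) x * (exp (- x * cosh B) * sinh (IZR nZ * B))).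
Proof.
  intros Hx. eapply is_derive_val; [| apply W_deriv_raw].
  replace (nZ + 1 - 1)%Z with nZ by lia.
  set (N := IZR nZ).
  assert (R1 := I_rec nZ x).
  assert (R2 := I_rec (nZ + 1) x). replace (nZ + 1 - 1)%Z with nZ in R2 by lia.
  assert (R3 := kt_rec nZ B x). fold (ktf nZ B x) (ktf (nZ + 1) B x) (ktf (nZ - 1) B x) in R3.
  assert (R4 := kt_rec (nZ + 1) B x). replace (nZ + 1 - 1)%Z with nZ in R4 by lia.
  fold (ktf nZ B x) (ktf (nZ + 1) B x) (ktf (nZ + 1 + 1) B x) in R4.
  rewrite plus_IZR in R2, R4 |- *. fold N in R1, R2, R3, R4 |- *.
  set (I0 := besselI nZ x) in *. set (Im := besselI (nZ - 1) x) in *.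
  set (I1 := besselI (nZ + 1) x) in *. set (I2 := besselI (nZ + 1 + 1) x) in *.
  set (K0 := ktf nZ B x) in *. set (Km := ktf (nZ - 1) B x) in *.
  set (K1 := ktf (nZ + 1) B x) in *. set (K2 := ktf (nZ + 1 + 1) B x) in *.
  set (b0 := exp (- x * cosh B) * sinh (N * B)) in *.
  set (b1 := exp (- x * cosh B) * sinh ((N + 1) * B)) in *.
  assert (HIm : Im = I1 + 2 * N * I0 / x) by (apply (Rmult_eq_reg_l x); [|lra]; field_simplify; lra).
  assert (HI2 : I2 = I0 - 2 * (N + 1) * I1 / x) by (apply (Rmult_eq_reg_l x); [|lra]; field_simplify; lra).
  assert (HKm : Km = K1 - 2 * (N * K0 - b0) / x) by (apply (Rmult_eq_reg_l x); [|lra]; field_simplify; lra).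
  assert (HK2 : K2 = K0 + 2 * ((N + 1) * K1 - b1) / x) by (apply (Rmult_eq_reg_l x); [|lra]; field_simplify; lra).
  rewrite HIm, HI2, HKm, HK2. match goal with |- ?a = ?b => change (@eq R a b) end. field. lra.
Qed.


Lemma sinh_nonneg z : 0 <= z -> 0 <= sinh z.
Proof. intros Hz. unfold sinh. assert (exp (- z) <= exp z) by (apply exp_le; lra). lra. Qed.

Lemma ktf_nonneg nu B x : 0 <= B -> 0 <= ktf nu B x.
Proof. intros HB. unfold ktf. apply RInt_ge_0; auto. apply ex_RInt_fK. intros; left; apply fK_pos. Qed.

Lemma ex_derive_Wf nZ B y : ex_derive (Wf nZ B) y.
Proof. eexists. apply W_deriv_raw. Qed.

Lemma RInt_gam_deriv n a y : is_derive (fun y => RInt (gam n a) 0 y) y (gam n a y).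
Proof.
  apply (is_derive_RInt (V:=R_NormedModule) (gam n a) (fun y => RInt (gam n a) 0 y) 0 y).
  - apply filter_forall. intros b. apply RInt_correct_R, ex_RInt_gam.
  - apply (ex_derive_continuous (V:=R_NormedModule)). unfold gam. auto_derive. auto.
Qed.

Lemma W_le (n : nat) B x : 0 < B -> 0 <= x ->
  Wf (Z.of_nat n) B x <= sinh (IZR (Z.of_nat n + 1) * B) / (2 ^ n * INR (fact n))
                        * RInt (gam n (cosh B - 1)) 0 x.
Proof.
  intros HB Hx. set (nZ := Z.of_nat n).
  set (c := sinh (IZR (nZ + 1) * B) / (2 ^ n * INR (fact n))).
  set (a := cosh B - 1).
  assert (HN : 0 <= IZR nZ) by (unfold nZ; rewrite <- INR_IZR_INZ; apply pos_INR).
  assert (HS : 0 <= sinh (IZR (nZ + 1) * B)) by (apply sinh_nonneg; rewrite plus_IZR; nra).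
  assert (HF := INR_fact_pos n).
  assert (H2n : 0 < 2 ^ n) by (apply pow_lt; lra).
  assert (H := mono_deriv_nonincr (fun y => Wf nZ B y - c * RInt (gam n a) 0 y)
     (fun y => (besselI nZ y * (exp (- y * cosh B) * sinh (IZR (nZ + 1) * B))
       - besselI (nZ + 1) y * (exp (- y * cosh B) * sinh (IZR nZ * B))) - c * gam n a y) 0 x Hx).
  assert (Hm : Wf nZ B x - c * RInt (gam n a) 0 x <= Wf nZ B 0 - c * RInt (gam n a) 0 0).
  { apply H.
    - intros y _. eexists. apply (is_derive_minus (Wf nZ B) (fun y => c * RInt (gam n a) 0 y)).
      apply W_deriv_raw. apply (is_derive_scal (fun y => RInt (gam n a) 0 y)). apply RInt_gam_deriv.
    - intros y Hy. apply (is_derive_minus (Wf nZ B) (fun y => c * RInt (gam n a) 0 y)).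
      apply W_deriv; lra. apply (is_derive_scal (fun y => RInt (gam n a) 0 y)). apply RInt_gam_deriv.
    - intros y Hy.
      assert (HI1 : 0 <= besselI (nZ + 1) y) by (apply I_pos; lra).
      assert (Hb0 : 0 <= exp (- y * cosh B) * sinh (IZR nZ * B))
        by (apply Rmult_le_pos; [left; apply exp_pos | apply sinh_nonneg; nra]).
      assert (HI0 := I_small n y ltac:(lra)). fold nZ in HI0.
      assert (Hb1 : 0 <= exp (- y * cosh B) * sinh (IZR (nZ + 1) * B))
        by (apply Rmult_le_pos; [left; apply exp_pos | auto]).
      assert (Heq : (y / 2) ^ n / INR (fact n) * exp y * (exp (- y * cosh B) * sinh (IZR (nZ + 1) * B))
                    = c * gam n a y).
      { unfold c, gam, a. unfold Rdiv. rewrite Rpow_mult_distr, pow_inv.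
        replace (exp (- (cosh B - 1) * y)) with (exp y * exp (- y * cosh B))
          by (rewrite <- exp_plus; f_equal; ring).
        field. lra. }
      assert (besselI nZ y * (exp (- y * cosh B) * sinh (IZR (nZ + 1) * B)) <=
              (y / 2) ^ n / INR (fact n) * exp y * (exp (- y * cosh B) * sinh (IZR (nZ + 1) * B)))
        by (apply Rmult_le_compat_r; auto).
      assert (0 <= besselI (nZ + 1) y * (exp (- y * cosh B) * sinh (IZR nZ * B))) by (apply Rmult_le_pos; auto).
      lra. }
  unfold Wf in Hm at 2. rewrite RInt_point in Hm. unfold zero in Hm; simpl in Hm.
  fold c a. lra.
Qed.


Lemma one_plus_pow_le (n : nat) : (1 + 1 / INR (S n)) ^ S n <= 3.
Proof.
  assert (HS : 0 < INR (S n)) by (apply lt_0_INR; lia).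
  apply Rle_trans with (exp (1 / INR (S n)) ^ S n).
  - apply pow_incr. split. assert (0 < 1 / INR (S n)) by (apply Rdiv_lt_0_compat; lra). lra.
    apply exp_ineq1_le.
  - rewrite <- exp_INR_mult. replace (INR (S n) * (1 / INR (S n))) with 1 by (field; lra).
    apply exp_le_3.
Qed.

Lemma W_final (n : nat) x : 0 < x ->
  x * besselI (Z.of_nat n) x * besselK (Z.of_nat n + 1) x <= 4.
Proof.
  intros Hx. set (nZ := Z.of_nat n).
  set (P := x * besselI nZ x).
  assert (HP : 0 <= P) by (unfold P; apply Rmult_le_pos; [lra | apply I_pos; lra]).
  set (eps := 1 / (P + 1)).
  assert (Heps : 0 < eps) by (unfold eps; apply Rdiv_lt_0_compat; lra).
  destruct (K_approx (nZ + 1) x eps Hx Heps) as [B0 [HB0 HBa]].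
  assert (HSn : 0 < INR (S n)) by (apply lt_0_INR; lia).
  set (B := Rmax (Rmax B0 1) (ln (2 * (INR n + 2)))).
  assert (HB1 : 1 <= B) by (unfold B; eapply Rle_trans; [| apply Rmax_l]; apply Rmax_r).
  assert (HBB0 : B0 <= B) by (unfold B; eapply Rle_trans; [| apply Rmax_l]; apply Rmax_l).
  assert (HBln : ln (2 * (INR n + 2)) <= B) by (unfold B; apply Rmax_r).
  specialize (HBa B HBB0).
  set (q := exp B / 2).
  assert (Hq : INR n + 2 <= q).
  { unfold q. assert (exp (ln (2 * (INR n + 2))) <= exp B) by (apply exp_le; auto).
    rewrite exp_ln in H by (assert (0 <= INR n) by apply pos_INR; lra). lra. }
  assert (Hn0 : 0 <= INR n) by apply pos_INR.
  set (a := cosh B - 1).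
  assert (Ha : q - 1 <= a) by (unfold a, q, cosh; assert (0 < exp (- B)) by apply exp_pos; lra).
  assert (Ha0 : 0 < a) by lra.
  assert (HW := W_le n B x ltac:(lra) ltac:(lra)). fold nZ a in HW.
  assert (HG := gam_bound n a x Ha0 ltac:(lra)).
  set (Sv := sinh (IZR (nZ + 1) * B)) in *.
  assert (HS : 0 <= Sv) by (apply sinh_nonneg; unfold nZ; rewrite plus_IZR, <- INR_IZR_INZ; nra).
  assert (HF := INR_fact_pos n).
  assert (H2n : 0 < 2 ^ n) by (apply pow_lt; lra).
  assert (HaS : 0 < a ^ S n) by (apply pow_lt; lra).
  assert (HW2 : Wf nZ B x <= Sv / (2 ^ n * a ^ S n)).
  { apply Rle_trans with (1 := HW).
    apply Rle_trans with (Sv / (2 ^ n * INR (fact n)) * (INR (fact n) / a ^ S n)).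
    - apply Rmult_le_compat_l; auto. unfold Rdiv. apply Rmult_le_pos; auto.
      left; apply Rinv_0_lt_compat; nra.
    - right. field. lra. }
  assert (HSle : Sv <= 2 ^ n * q ^ S n).
  { unfold Sv, sinh. assert (0 < exp (- (IZR (nZ + 1) * B))) by apply exp_pos.
    unfold nZ. rewrite plus_IZR, <- INR_IZR_INZ.
    replace ((INR n + 1) * B) with (INR (S n) * B) by (rewrite S_INR; ring).
    rewrite exp_INR_mult. unfold q.
    replace ((exp B / 2) ^ S n) with (exp B ^ S n / 2 ^ S n) by (unfold Rdiv; rewrite Rpow_mult_distr, pow_inv; reflexivity).
    cbn [pow]. assert (0 < exp (- (INR (S n) * B))) by apply exp_pos. replace (2 ^ n * (exp B * exp B ^ n / (2 * 2 ^ n))) with (exp B * exp B ^ n / 2) by (field; lra). lra. }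
  assert (Hratio : q / a <= 1 + 1 / INR (S n)).
  { rewrite S_INR. apply (Rmult_le_reg_r a); auto.
    replace (q / a * a) with q by (field; lra).
    replace ((1 + 1 / (INR n + 1)) * a) with (a + a / (INR n + 1)) by (field; lra).
    assert (a / (INR n + 1) >= 1). { apply Rle_ge. apply (Rmult_le_reg_r (INR n + 1)); [lra|].
      replace (a / (INR n + 1) * (INR n + 1)) with a by (field; lra). lra. }
    lra. }
  assert (HW3 : Wf nZ B x <= 3).
  { apply Rle_trans with (1 := HW2).
    apply Rle_trans with ((q / a) ^ S n).
    - unfold Rdiv at 2. rewrite Rpow_mult_distr, pow_inv.
      apply (Rmult_le_reg_r (2 ^ n * a ^ S n)); [nra|].
      replace (Sv / (2 ^ n * a ^ S n) * (2 ^ n * a ^ S n)) with Sv by (field; lra).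
      replace (q ^ S n * / a ^ S n * (2 ^ n * a ^ S n)) with (2 ^ n * q ^ S n) by (field; lra).
      auto.
    - apply Rle_trans with ((1 + 1 / INR (S n)) ^ S n); [| apply one_plus_pow_le].
      apply pow_incr. split; auto. unfold Rdiv. apply Rmult_le_pos; [lra | left; apply Rinv_0_lt_compat; lra]. }
  assert (HWge : P * ktf (nZ + 1) B x <= Wf nZ B x).
  { unfold Wf, P.
    assert (0 <= besselI (nZ + 1) x * ktf nZ B x) by (apply Rmult_le_pos; [apply I_pos; lra | apply ktf_nonneg; lra]).
    nra. }
  fold (ktf (nZ + 1) B x) in HBa.
  assert (P * besselK (nZ + 1) x <= P * (ktf (nZ + 1) B x + eps)) by (apply Rmult_le_compat_l; lra).
  assert (P * eps <= 1) by (unfold eps; apply (Rmult_le_reg_r (P + 1)); [lra|]; field_simplify; lra).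
  unfold P in *. lra.
Qed.


Lemma Gexp (k : nat) t u s : 0 < t -> t <= u -> u <= s ->
  besselK (Z.of_nat k + 1) s * besselI (Z.of_nat k) t <= 4 * exp (u - s) / u.
Proof.
  intros Ht Htu Hus.
  assert (HI := I_mono (Z.of_nat k) t u ltac:(lra) Htu).
  assert (HK := K_exp_decr (Z.of_nat k + 1) u s ltac:(lra) Hus).
  assert (HW := W_final k u ltac:(lra)).
  assert (HKs : 0 <= besselK (Z.of_nat k + 1) s) by (apply K_nonneg; lra).
  assert (HKu : 0 <= besselK (Z.of_nat k + 1) u) by (apply K_nonneg; lra).
  assert (HIt : 0 <= besselI (Z.of_nat k) t) by (apply I_pos; lra).
  assert (Hes : 0 < exp s) by apply exp_pos.
  assert (E : exp (u - s) = exp u / exp s) by (unfold Rminus; rewrite exp_plus, exp_Ropp; reflexivity).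
  assert (HK' : besselK (Z.of_nat k + 1) s <= exp (u - s) * besselK (Z.of_nat k + 1) u).
  { rewrite E. apply (Rmult_le_reg_l (exp s)); auto.
    replace (exp s * (exp u / exp s * besselK (Z.of_nat k + 1) u)) with (exp u * besselK (Z.of_nat k + 1) u) by (field; lra).
    lra. }
  assert (0 < exp (u - s)) by apply exp_pos.
  apply Rle_trans with (exp (u - s) * besselK (Z.of_nat k + 1) u * besselI (Z.of_nat k) u).
  { apply Rle_trans with (exp (u - s) * besselK (Z.of_nat k + 1) u * besselI (Z.of_nat k) t).
    apply Rmult_le_compat_r; auto. apply Rmult_le_compat_l; auto. nra. }
  apply (Rmult_le_reg_l u); [lra|].
  replace (u * (4 * exp (u - s) / u)) with (exp (u - s) * 4) by (field; lra).
  replace (u * (exp (u - s) * besselK (Z.of_nat k + 1) u * besselI (Z.of_nat k) u))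
    with (exp (u - s) * (u * besselI (Z.of_nat k) u * besselK (Z.of_nat k + 1) u)) by ring.
  apply Rmult_le_compat_l; lra.
Qed.

Lemma Gpow (k : nat) t s : 0 < t -> t <= s ->
  besselK (Z.of_nat k + 1) s * besselI (Z.of_nat k) t <= 4 * (t / s) ^ k / s.
Proof.
  intros Ht Hts.
  assert (HR := I_ratio k t s Ht Hts).
  assert (HW := W_final k s ltac:(lra)).
  assert (HKs : 0 <= besselK (Z.of_nat k + 1) s) by (apply K_nonneg; lra).
  assert (Hsk : 0 < s ^ k) by (apply pow_lt; lra).
  assert (HI : besselI (Z.of_nat k) t <= besselI (Z.of_nat k) s * (t / s) ^ k).
  { unfold Rdiv. rewrite Rpow_mult_distr, pow_inv.
    apply (Rmult_le_reg_r (s ^ k)); auto.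
    replace (besselI (Z.of_nat k) s * (t ^ k * / s ^ k) * s ^ k) with (besselI (Z.of_nat k) s * t ^ k) by (field; lra).
    auto. }
  assert (Htk : 0 <= (t / s) ^ k) by (apply pow_le; unfold Rdiv; apply Rmult_le_pos; [lra | left; apply Rinv_0_lt_compat; lra]).
  apply Rle_trans with (besselK (Z.of_nat k + 1) s * (besselI (Z.of_nat k) s * (t / s) ^ k)).
  { apply Rmult_le_compat_l; auto. }
  apply (Rmult_le_reg_l s); [lra|].
  replace (s * (4 * (t / s) ^ k / s)) with ((t / s) ^ k * 4) by (field; lra).
  replace (s * (besselK (Z.of_nat k + 1) s * (besselI (Z.of_nat k) s * (t / s) ^ k)))
    with ((t / s) ^ k * (s * besselI (Z.of_nat k) s * besselK (Z.of_nat k + 1) s)) by ring.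
  apply Rmult_le_compat_l; lra.
Qed.

Lemma Gred n t s : 0 < t -> 0 < s ->
  besselK (n + 1) s * besselI n t <=
  besselK (Z.of_nat (Z.abs_nat n) + 1) s * besselI (Z.of_nat (Z.abs_nat n)) t.
Proof.
  intros Ht Hs. rewrite Nat2Z.inj_abs_nat.
  assert (HI : besselI n t = besselI (Z.abs n) t).
  { destruct (Z.abs_spec n) as [[_ ->]|[_ ->]]; auto. rewrite I_sym. auto. }
  rewrite HI. apply Rmult_le_compat_r. apply I_pos; lra.
  apply K_order; auto. lia.
Qed.


Ltac req := match goal with |- ?a = ?b => change (@eq R a b) end.

Lemma RInt_anti (g F : R -> R) a b : a <= b ->
  (forall x, a <= x <= b -> is_derive F x (g x)) ->
  (forall x, a <= x <= b -> ex_derive g x) ->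
  RInt g a b = F b - F a.
Proof.
  intros Hab HF Hg. apply RInt_unique_R.
  apply (is_RInt_derive (V:=R_CompleteNormedModule) F g).
  - intros x Hx. rewrite Rmin_left, Rmax_right in Hx by lra. apply HF; auto.
  - intros x Hx. rewrite Rmin_left, Rmax_right in Hx by lra.
    exact (ex_derive_continuous g x (Hg x Hx)).
Qed.

Lemma ex_RInt_J1 n c a b : ex_RInt (fun t => c * besselI n t * t) a b.
Proof.
  apply ex_RInt_der. intros z. eexists.
  apply (is_derive_mult_R (fun t => c * besselI n t) (fun t => t)).
  apply (is_derive_scal (besselI n)). apply I_deriv. apply (is_derive_id (K:=R_AbsRing)).
Qed.

Lemma ex_RInt_J2 n c t M : 0 < t -> t <= M -> ex_RInt (fun s => besselK n s * c * s) t M.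
Proof.
  intros Ht HtM. apply (ex_RInt_continuous (V:=R_CompleteNormedModule)).
  intros z Hz. rewrite Rmin_left, Rmax_right in Hz by lra.
  apply continuity_pt_filterlim.
  apply continuity_pt_mult. apply continuity_pt_mult. apply K_cont; lra.
  apply continuity_pt_const. intros u v; reflexivity. apply continuity_pt_id.
Qed.

Lemma J1_bound n s : 0 < s ->
  RInt (fun t => besselK (n + 1) s * besselI n t * t) 0 s <= 4 /\
  RInt (fun t => besselK (n + 1) s * besselI n t * t) 0 s <= 4 * s / (INR (Z.abs_nat n) + 2).
Proof.
  intros Hs. set (k := Z.abs_nat n).
  assert (Hex := ex_RInt_J1 n (besselK (n + 1) s) 0 s).
  split.
  - apply Rle_trans with (RInt (fun t => 4 * exp (t - s)) 0 s).
    + apply RInt_le; auto; [lra| apply ex_RInt_der; intros; auto_derive; auto |].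
      intros t Ht. assert (H := Gred n t s ltac:(lra) Hs). fold k in H.
      assert (H2 := Gexp k t t s ltac:(lra) ltac:(lra) ltac:(lra)).
      apply Rle_trans with (besselK (Z.of_nat k + 1) s * besselI (Z.of_nat k) t * t).
      apply Rmult_le_compat_r; lra.
      apply (Rmult_le_compat_r t) in H2; [|lra].
      replace (4 * exp (t - s) / t * t) with (4 * exp (t - s)) in H2 by (field; lra). auto.
    + rewrite (RInt_anti _ (fun t => 4 * exp (t - s))); [| lra | |].
      * replace (s - s) with 0 by ring. rewrite exp_0. assert (0 < exp (0 - s)) by apply exp_pos. lra.
      * intros x _. auto_derive. auto. req. unfold Rminus. ring.
      * intros x _. auto_derive. auto.
  - assert (HSk : 0 < INR k + 2) by (assert (0 <= INR k) by apply pos_INR; lra).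
    apply Rle_trans with (RInt (fun t => 4 * t ^ S k / s ^ S k) 0 s).
    + apply RInt_le; auto; [lra| apply ex_RInt_der; intros; auto_derive; auto; apply pow_nonzero; lra |].
      intros t Ht. assert (H := Gred n t s ltac:(lra) Hs). fold k in H.
      assert (H2 := Gpow k t s ltac:(lra) ltac:(lra)).
      apply Rle_trans with (besselK (Z.of_nat k + 1) s * besselI (Z.of_nat k) t * t).
      apply Rmult_le_compat_r; lra.
      apply (Rmult_le_compat_r t) in H2; [|lra].
      apply Rle_trans with (1 := H2). right.
      unfold Rdiv. rewrite Rpow_mult_distr, pow_inv. cbn [pow]. field. repeat split; try apply pow_nonzero; lra.
    + assert (Hsn : 0 < s ^ S k) by (apply pow_lt; lra).
      rewrite (RInt_anti _ (fun t => 4 * t ^ S (S k) / ((INR k + 2) * s ^ S k))); [| lra | |].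
      * right. cbn [pow]. field. repeat split; try apply pow_nonzero; lra.
      * intros x _. auto_derive. auto.
        req. change (match k with O => 1 | S _ => INR k + 1 end) with (INR (S k)). rewrite !S_INR. cbn [pow]. field. repeat split; try apply pow_nonzero; lra.
      * intros x _. auto_derive. auto.
Qed.



Lemma J2_pt n t s : 0 < t -> t <= s ->
  besselK (n + 1) s * besselI n t * s <=
  besselK (Z.of_nat (Z.abs_nat n) + 1) s * besselI (Z.of_nat (Z.abs_nat n)) t * s.
Proof. intros. apply Rmult_le_compat_r; [lra|]. apply Gred; lra. Qed.

Lemma exp_int_bound t a b : 0 < t -> t <= a -> a <= b ->
  RInt (fun s => 4 * exp (t - s) / t * s) a b <= 4 * (a + 1) * exp (t - a) / t.
Proof.
  intros Ht Hta Hab.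
  rewrite (RInt_anti _ (fun s => - 4 * (s + 1) * exp (t - s) / t)); auto.
  - assert (0 < exp (t - b)) by apply exp_pos.
    assert (0 <= 4 * (b + 1) * exp (t - b) / t).
    { unfold Rdiv. apply Rmult_le_pos. apply Rmult_le_pos; lra. left; apply Rinv_0_lt_compat; lra. }
    replace (- 4 * (b + 1) * exp (t - b) / t) with (- (4 * (b + 1) * exp (t - b) / t)) by (field; lra).
    replace (- 4 * (a + 1) * exp (t - a) / t) with (- (4 * (a + 1) * exp (t - a) / t)) by (field; lra).
    lra.
  - intros x _. auto_derive. lra. req. unfold Rminus. field. lra.
  - intros x _. auto_derive. lra.
Qed.

Lemma J2_case1 n t M : 1 <= t -> t <= M ->
  RInt (fun s => besselK (n + 1) s * besselI n t * s) t M <= 8.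
Proof.
  intros Ht1 HtM. assert (Ht : 0 < t) by lra. set (k := Z.abs_nat n).
  apply Rle_trans with (RInt (fun s => 4 * exp (t - s) / t * s) t M).
  - apply RInt_le; [lra | apply ex_RInt_J2; lra | |].
    + apply ex_RInt_der. intros z. auto_derive. lra.
    + intros s Hs. apply Rle_trans with (1 := J2_pt n t s ltac:(lra) ltac:(lra)). fold k.
      apply Rmult_le_compat_r; [lra|]. apply Gexp; lra.
  - apply Rle_trans with (1 := exp_int_bound t t M Ht (Rle_refl t) HtM).
    replace (t - t) with 0 by ring. rewrite exp_0.
    apply (Rmult_le_reg_r t); auto. replace (4 * (t + 1) * 1 / t * t) with (4 * (t + 1)) by (field; lra).
    lra.
Qed.

Lemma J2_case2 n t M : 0 < t -> t < 1 -> 1 <= M ->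
  RInt (fun s => besselK (n + 1) s * besselI n t * s) t M <= 12.
Proof.
  intros Ht Ht1 HM. set (k := Z.abs_nat n).
  pose (f := fun s => besselK (n + 1) s * besselI n t * s).
  change (RInt f t M <= 12).
  assert (E : RInt f t M = RInt f t 1 + RInt f 1 M).
  { symmetry. exact (RInt_Chasles (V:=R_CompleteNormedModule) f t 1 M
      (ex_RInt_J2 (n + 1) (besselI n t) t 1 Ht ltac:(lra)) (ex_RInt_J2 (n + 1) (besselI n t) 1 M ltac:(lra) HM)). }
  rewrite E.
  assert (H1 : RInt f t 1 <= 4).
  { unfold f. apply Rle_trans with (RInt (fun _ => 4) t 1).
    - apply RInt_le; [lra | apply ex_RInt_J2; lra | apply ex_RInt_const |].
      intros s Hs. apply Rle_trans with (1 := J2_pt n t s ltac:(lra) ltac:(lra)). fold k.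
      assert (H := Gpow k t s ltac:(lra) ltac:(lra)).
      apply (Rmult_le_compat_r s) in H; [|lra].
      apply Rle_trans with (1 := H).
      replace (4 * (t / s) ^ k / s * s) with (4 * (t / s) ^ k) by (field; lra).
      assert (Hts : 0 <= t / s <= 1).
      { split. unfold Rdiv; apply Rmult_le_pos; [lra | left; apply Rinv_0_lt_compat; lra].
        apply (Rmult_le_reg_r s); [lra|]. replace (t / s * s) with t by (field; lra). lra. }
      assert (H3 := pow_incr (t / s) 1 k Hts). rewrite pow1 in H3.
      lra.
    - rewrite RInt_const. unfold scal; simpl; unfold mult; simpl. lra. }
  assert (H2 : RInt f 1 M <= 8).
  { unfold f. apply Rle_trans with (RInt (fun s => 4 * exp (1 - s) / 1 * s) 1 M).
    - apply RInt_le; [lra | apply ex_RInt_J2; lra | |].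
      + apply ex_RInt_der. intros z. auto_derive. lra.
      + intros s Hs. apply Rle_trans with (1 := J2_pt n t s ltac:(lra) ltac:(lra)). fold k.
        apply Rmult_le_compat_r; [lra|]. apply Gexp; lra.
    - apply Rle_trans with (1 := exp_int_bound 1 1 M ltac:(lra) (Rle_refl 1) HM).
      replace (1 - 1) with 0 by ring. rewrite exp_0. lra. }
  lra.
Qed.

Lemma J2_case3 n t M : 0 < t -> t <= M -> (2 <= Z.abs_nat n)%nat ->
  RInt (fun s => besselK (n + 1) s * besselI n t * s) t M <= 4 * M / (INR (Z.abs_nat n) - 1).
Proof.
  intros Ht HtM Hk. set (k := Z.abs_nat n) in *.
  destruct k as [|[|j]] eqn:Ek; [lia | lia |].
  assert (HJ : 0 < INR (S j)) by (apply lt_0_INR; lia).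
  replace (INR (S (S j)) - 1) with (INR (S j)) by (rewrite (S_INR (S j)); ring).
  apply Rle_trans with (RInt (fun s => 4 * t ^ S (S j) / s ^ S (S j)) t M).
  - apply RInt_le; [lra | apply ex_RInt_J2; lra | |].
    + apply (ex_RInt_continuous (V:=R_CompleteNormedModule)). intros z Hz.
      rewrite Rmin_left, Rmax_right in Hz by lra.
      apply (ex_derive_continuous (V:=R_NormedModule)). auto_derive. apply Rgt_not_eq. assert (0 < z ^ j) by (apply pow_lt; lra). apply Rmult_lt_0_compat; [lra|]. apply Rmult_lt_0_compat; lra.
    + intros s Hs. apply Rle_trans with (1 := J2_pt n t s ltac:(lra) ltac:(lra)).
      fold k. rewrite Ek.
      assert (H := Gpow (S (S j)) t s ltac:(lra) ltac:(lra)).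
      apply (Rmult_le_compat_r s) in H; [|lra].
      apply Rle_trans with (1 := H). right.
      unfold Rdiv. rewrite Rpow_mult_distr, pow_inv. field. split; [apply pow_nonzero|]; lra.
  - assert (HM0 : 0 < M) by lra.
    rewrite (RInt_anti _ (fun s => - 4 * t ^ S (S j) / (INR (S j) * s ^ S j))); [| lra | |].
    + assert (0 < t ^ S j) by (apply pow_lt; lra).
      assert (0 < M ^ S j) by (apply pow_lt; lra).
      assert (0 < t ^ S (S j)) by (apply pow_lt; lra).
      assert (E1 : - 4 * t ^ S (S j) / (INR (S j) * t ^ S j) = - (4 * t / INR (S j))).
      { cbn [pow]. field. repeat split; try apply pow_nonzero; lra. }
      assert (0 <= 4 * t ^ S (S j) / (INR (S j) * M ^ S j)).
      { unfold Rdiv. apply Rmult_le_pos. lra. left; apply Rinv_0_lt_compat; nra. }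
      replace (- 4 * t ^ S (S j) / (INR (S j) * M ^ S j)) with (- (4 * t ^ S (S j) / (INR (S j) * M ^ S j))) by (field; lra).
      rewrite E1.
      assert (4 * t / INR (S j) <= 4 * M / INR (S j)).
      { unfold Rdiv. apply Rmult_le_compat_r. left; apply Rinv_0_lt_compat; lra. lra. }
      lra.
    + intros x Hx. auto_derive. change (match j with O => 1 | S _ => INR j + 1 end) with (INR (S j)). apply Rgt_not_eq. assert (0 < x ^ j) by (apply pow_lt; lra). apply Rmult_lt_0_compat; [lra|]. apply Rmult_lt_0_compat; lra.
      req. change (match j with O => 1 | S _ => INR j + 1 end) with (INR (S j)).
      cbn [pow]. field. repeat split; try apply pow_nonzero; lra.
    + intros x Hx. auto_derive. apply Rgt_not_eq. assert (0 < x ^ j) by (apply pow_lt; lra). apply Rmult_lt_0_compat; [lra|]. apply Rmult_lt_0_compat; lra.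
Qed.


Lemma final_arith M K J : 1 <= M -> 0 <= K -> J <= 12 -> J <= 24 * M / (K + 1) ->
  / M * J <= 40 / sqrt (1 + M ^ 2 + K ^ 2).
Proof.
  intros HM HK HJ1 HJ2.
  set (X := 1 + M ^ 2 + K ^ 2).
  assert (HX : 0 < X) by (unfold X; nra).
  set (D := sqrt X).
  assert (HD : 0 < D) by (apply sqrt_lt_R0; auto).
  assert (HD2 : D * D = X) by (apply sqrt_sqrt; lra).
  set (Q := / M * J).
  assert (HMi : 0 < / M) by (apply Rinv_0_lt_compat; lra).
  assert (HQM : Q * M = J) by (unfold Q; field; lra).
  assert (HQK : Q * (K + 1) <= 24).
  { unfold Q. apply (Rmult_le_reg_l M); [lra|].
    replace (M * (/ M * J * (K + 1))) with (J * (K + 1)) by (field; lra).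
    apply (Rmult_le_compat_r (K + 1)) in HJ2; [|lra].
    replace (24 * M / (K + 1) * (K + 1)) with (M * 24) in HJ2 by (field; lra). lra. }
  assert (HQD : Q * D <= 40).
  { destruct (Rle_dec Q 0) as [Hq|Hq]; [nra|].
    assert (Hsq : Q * Q * X <= 1600).
    { destruct (Rle_dec (K + 1) M) as [Hc|Hc].
      - assert ((K+1)*(K+1) <= M*M) by (apply Rmult_le_compat; lra).
        assert (X <= 2 * (M * M)) by (unfold X; replace (M^2) with (M*M) by ring; replace (K^2) with (K*K) by ring; nra).
        assert (Q * M <= 12) by lra.
        assert (0 <= Q * M) by (apply Rmult_le_pos; lra).
        assert (Q * M * (Q * M) <= 144) by nra.
        nra.
      - assert (M*M <= (K+1)*(K+1)) by (apply Rmult_le_compat; lra).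
        assert (X <= 2 * ((K + 1) * (K + 1))) by (unfold X; replace (M^2) with (M*M) by ring; replace (K^2) with (K*K) by ring; nra).
        assert (0 <= Q * (K + 1)) by (apply Rmult_le_pos; lra).
        assert (Q * (K + 1) * (Q * (K + 1)) <= 576) by nra.
        nra. }
    rewrite <- HD2 in Hsq. nra. }
  apply (Rmult_le_reg_r D); auto. fold Q. unfold Rdiv.
  replace (40 * / D * D) with 40 by (field; lra). lra.
Qed.


Theorem lemma3p4 :
  exists C : R,
    forall m n : Z, m <> 0%Z ->
      (forall s : R, 0 < s <= Rabs (IZR m) ->
         / Rabs (IZR m) *
           RInt (fun t => besselK (n + 1) s * besselI n t * t) 0 s
         <= C / sqrt (1 + IZR m ^ 2 + IZR n ^ 2)) /\
      (forall t : R, 0 < t <= Rabs (IZR m) ->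
         / Rabs (IZR m) *
           RInt (fun s => besselK (n + 1) s * besselI n t * s) t (Rabs (IZR m))
         <= C / sqrt (1 + IZR m ^ 2 + IZR n ^ 2)).
Proof.
  exists 40. intros m n Hm.
  assert (HM : 1 <= Rabs (IZR m)).
  { rewrite <- abs_IZR. apply IZR_le. lia. }
  assert (Hk : INR (Z.abs_nat n) = Rabs (IZR n)).
  { rewrite INR_IZR_INZ, Nat2Z.inj_abs_nat, abs_IZR. reflexivity. }
  assert (ED : 1 + IZR m ^ 2 + IZR n ^ 2 = 1 + Rabs (IZR m) ^ 2 + INR (Z.abs_nat n) ^ 2).
  { rewrite Hk, !pow2_abs. reflexivity. }
  rewrite ED.
  set (M := Rabs (IZR m)) in *. set (k := Z.abs_nat n) in *.
  assert (Hk0 : 0 <= INR k) by apply pos_INR.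
  split.
  - intros s [Hs HsM]. destruct (J1_bound n s Hs) as [A B]. fold k in B.
    apply final_arith; auto; [lra|].
    apply Rle_trans with (1 := B).
    apply (Rmult_le_reg_r ((INR k + 2) * (INR k + 1))); [nra|].
    replace (4 * s / (INR k + 2) * ((INR k + 2) * (INR k + 1))) with (4 * s * (INR k + 1)) by (field; lra).
    replace (24 * M / (INR k + 1) * ((INR k + 2) * (INR k + 1))) with (24 * M * (INR k + 2)) by (field; lra).
    nra.
  - intros t [Ht HtM].
    assert (H12 : RInt (fun s => besselK (n + 1) s * besselI n t * s) t M <= 12).
    { destruct (Rle_dec 1 t) as [H1|H1].
      - assert (H := J2_case1 n t M H1 HtM). lra.
      - apply J2_case2; lra. }
    apply final_arith; auto.
    destruct (le_lt_dec 2 k) as [Hk2|Hk2].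
    + assert (H := J2_case3 n t M Ht HtM Hk2). fold k in H.
      assert (HK2 : 2 <= INR k) by (replace 2 with (INR 2) by (simpl; ring); apply le_INR; auto).
      apply Rle_trans with (1 := H).
      apply (Rmult_le_reg_r ((INR k - 1) * (INR k + 1))); [nra|].
      replace (4 * M / (INR k - 1) * ((INR k - 1) * (INR k + 1))) with (4 * M * (INR k + 1)) by (field; lra).
      replace (24 * M / (INR k + 1) * ((INR k - 1) * (INR k + 1))) with (24 * M * (INR k - 1)) by (field; lra).
      nra.
    + assert (HK1 : INR k <= 1) by (replace 1 with (INR 1) by (simpl; ring); apply le_INR; lia).
      apply Rle_trans with (1 := H12).
      apply (Rmult_le_reg_r (INR k + 1)); [lra|].
      replace (24 * M / (INR k + 1) * (INR k + 1)) with (24 * M) by (field; lra).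
      nra.
Qed.
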